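(* In $\mathrm{PG}(4,q)$ let $\alpha$ be a plane not contained in $\Sigma_\infty$ and containing no line of $\mathcal S$, and let $\mathcal N$ be a non-degenerate conic in $\alpha$. Then: (1) there is a Baer subplane $\mathcal B$ of $\mathrm{PG}(2,q^2)$ secant to $\ell_\infty$ with $[\mathcal B]=\alpha$, and an $\mathbb F_q$-conic $\mathcal C$ in $\mathcal B$ with $[\mathcal C]=\mathcal N$; (2) if $\mathcal N$ meets $\Sigma_\infty$ in a point of the spread line $[T]$, then $\bar T\in\mathcal C$; (3) if $\mathcal N$ is a $(PQ^q)$-special conic for distinct points $P,Q\in g$, then the $\mathbb F_{q^2}$-conic $\mathcal C^+$ meets $\ell_\infty$ in the points $\bar P,\bar Q$.
   Context: Bruck–Bose setting: $q$ a prime power; $\Sigma_\infty$ a hyperplane of $\mathrm{PG}(4,q)$ with regular spread $\mathcal S$; affine points $A$ of $\mathrm{PG}(2,q^2)$ correspond to points $[A]$ of $\mathrm{PG}(4,q)\setminus\Sigma_\infty$, points $\bar T\in\ell_\infty$ to spread lines $[T]$, lines $\ne\ell_\infty$ to planes not in $\Sigma_\infty$ containing a spread line. In $\mathrm{PG}(4,q^2)$ the transversals of $\mathcal S$ are conjugate lines $g,g^q$ (conjugation $X\mapsto X^q$ on coordinates) with $[T]^\star=TT^q$, $T=[T]^\star\cap g$, giving a bijection $\bar T\leftrightarrow T$ between $\ell_\infty$ and $g$; $\mathcal V^\star$ denotes the extension to $\mathrm{PG}(4,q^2)$. An $\mathbb F_{q^2}$-conic is a non-degenerate conic of $\mathrm{PG}(2,q^2)$;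 an $\mathbb F_q$-conic is a non-degenerate conic of a Baer subplane; $\mathcal C^+$ is the unique $\mathbb F_{q^2}$-conic containing the $\mathbb F_q$-conic $\mathcal C$. For a Baer subplane $\mathcal B$ secant to $\ell_\infty$, $[\mathcal B]$ is the plane of $\mathrm{PG}(4,q)$ whose affine points are $[X]$, $X$ affine in $\mathcal B$; for $\mathcal C\subset \mathcal B$, $[\mathcal C]$ is the closure in $[\mathcal B]$ of $\{[X]:X\in\mathcal C\text{ affine}\}$. A non-degenerate conic $\mathcal N$ of $\mathrm{PG}(4,q)$ is $(PQ^q)$-special if $\mathcal N^\star$ contains one point of the line $PQ^q$ and one point of the line $P^qQ$. *)

(* Defs.v *)
From HB Require Import structures.
From mathcomp Require Import all_boot all_order all_algebra all_field.
Set Implicit Arguments. Unset Strict Implicit. Unset Printing Implicit Defensive.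
Import GRing.Theory.
Local Open Scope ring_scope.

Section BB.
Variables (F : finFieldType) (K : fieldExtType F) (e : 2.-tuple K).

Definition emb (a : F) : K := in_alg K a.
Definition conjK (x : K) : K := x ^+ #|F|.
Definition conjv (m n : nat) (X : 'M[K]_(m, n)) := map_mx conjK X.
Definition embm (m n : nat) (X : 'M[F]_(m, n)) : 'M[K]_(m, n) := map_mx emb X.

Definition c0 (x : K) : F := coord e ord0 x.
Definition c1 (x : K) : F := coord e ord_max x.

Definition bbv (x y : K) (t : F) : 'rV[F]_5 :=
  \row_(k < 5) match val k with
               | 0 => c0 x | 1 => c1 x | 2 => c0 y | 3 => c1 y | _ => t end.

(* Bruck--Bose image [X] of an affine point X = (x:y:z), z <> 0, of PG(2,q^2) *)
Definition bbA (X : 'rV[K]_3) : 'rV[F]_5 :=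
  bbv (X 0 0 / X 0 2) (X 0 1 / X 0 2) 1.

(* the spread line [T] (2 x 5 matrix, rows spanning it) of the point
   T = (x:y:0) of l_infinity *)
Definition spreadline (X : 'rV[K]_3) : 'M[F]_(2, 5) :=
  \matrix_(i < 2) bbv (tnth e i * X 0 0) (tnth e i * X 0 1) 0.

(* matrix (row convention) of the F-linear map "multiplication by x" on
   K^2 = F^4 = Sigma_infinity, extended by 0 on the last coordinate *)
Definition mulrow (x : K) (i : 'I_5) : 'rV[F]_5 :=
  match val i with
  | 0 => bbv (x * tnth e ord0) 0 0
  | 1 => bbv (x * tnth e ord_max) 0 0
  | 2 => bbv 0 (x * tnth e ord0) 0
  | 3 => bbv 0 (x * tnth e ord_max) 0
  | _ => 0 end.
Definition mulmx5 (x : K) : 'M[F]_5 := \matrix_(i < 5) mulrow x i.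

(* the transversal g of the regular spread in PG(4,q^2): the points of
   Sigma_infinity^* on which every multiplication map acts as the scalar x
   (its conjugate g^q is the eigenspace for x^q) *)
Definition in_g (P : 'rV[K]_5) : Prop :=
  P 0 4 = 0 /\ forall x : K, P *m embm (mulmx5 x) = x *: P.

(* bijection l_infinity <-> g : Tbar = X corresponds to T = P iff
   P lies on [X]^* *)
Definition bar_of (X : 'rV[K]_3) (P : 'rV[K]_5) : bool :=
  (P <= embm (spreadline X))%MS.

End BB.

Definition qf (R : comNzRingType) (Qm : 'M[R]_3) (u : 'rV[R]_3) : R :=
  (u *m Qm *m u^T) 0 0.

(* non-degeneracy of the conic aX^2+bY^2+cZ^2+fYZ+gXZ+hXY = 0
   (characteristic-free discriminant 4abc + fgh - af^2 - bg^2 - ch^2) *)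
Definition conic_nondeg (R : comNzRingType) (Qm : 'M[R]_3) : bool :=
  let a := Qm 0 0 in let b := Qm 1 1 in let c := Qm 2 2 in
  let h := Qm 0 1 + Qm 1 0 in let g := Qm 0 2 + Qm 2 0 in
  let f := Qm 1 2 + Qm 2 1 in
  4 * a * b * c + f * g * h - a * f ^+ 2 - b * g ^+ 2 - c * h ^+ 2 != 0.

Arguments emb {F K} a.
Arguments embm {F K m n} X.
Arguments conjK {F K} x.
Arguments conjv {F K m n} X.

(* Main.v *)
Require Import Defs.
From HB Require Import structures.
From mathcomp Require Import all_boot all_order all_algebra all_field.
From mathcomp Require Import ring.
Import GRing.Theory.
Local Open Scope ring_scope.
Set Implicit Arguments. Unset Strict Implicit. Unset Printing Implicit Defensive.

Section Morph.
Variables (F : finFieldType) (K : fieldExtType F).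

Lemma emb_is_zmod : zmod_morphism (@emb F K).
Proof. by move=> x y; rewrite /emb rmorphB. Qed.
Lemma emb_is_monoid : monoid_morphism (@emb F K).
Proof. by rewrite /emb; split=> [|x y]; rewrite ?rmorph1 ?rmorphM. Qed.
HB.instance Definition _ := GRing.isZmodMorphism.Build F K (@emb F K) emb_is_zmod.
HB.instance Definition _ := GRing.isMonoidMorphism.Build F K (@emb F K) emb_is_monoid.

Lemma conj_addn (x y : K) : conjK (x + y) = conjK x + conjK y.
Proof.
rewrite /conjK; have [p _ pcharFp] := finPcharP F.
have -> : #|F| = #|pPrimeCharType pcharFp| by [].
rewrite (card_pprimeChar pcharFp).
have pK : p \in [pchar K] by rewrite (pchar_lalg K).
elim: (logn _ _) => [|n IHn]; first by rewrite !expr1.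
by rewrite expnSr !exprM IHn -!(pFrobenius_autE pK) rmorphD.
Qed.

Lemma conj_is_zmod : zmod_morphism (@conjK F K).
Proof.
move=> x y; have h (z : K) : conjK (- z) = - conjK z.
  apply/eqP; rewrite -subr_eq0 opprK -conj_addn addNr /conjK expr0n.
  by have := finNzRing_gt1 F; case: #|F|.
by rewrite conj_addn h.
Qed.
Lemma conj_is_monoid : monoid_morphism (@conjK F K).
Proof. by rewrite /conjK; split=> [|x y]; rewrite ?expr1n ?exprMn. Qed.
HB.instance Definition _ := GRing.isZmodMorphism.Build K K (@conjK F K) conj_is_zmod.
HB.instance Definition _ := GRing.isMonoidMorphism.Build K K (@conjK F K) conj_is_monoid.

Lemma conj_emb a : conjK (emb a : K) = emb a.
Proof. by rewrite /conjK -rmorphXn expf_card. Qed.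

Lemma conj_fixed (x : K) : conjK x = x -> exists a, x = emb a.
Proof.
move=> hx; have : x \in (1%AS : {subfield K}).
  by rewrite Fermat's_little_theorem dimv1 expn1 -/(conjK x) hx.
by case/vlineP=> a ->; exists a; rewrite /emb /= -in_algE.
Qed.

Lemma conj_invol (e : 2.-tuple K) (he : basis_of fullv e) (x : K) :
  conjK (conjK x) = x :> K.
Proof.
have := Fermat's_little_theorem (aspacef K) x.
rewrite memvf (size_basis he) /conjK -exprM.
by rewrite expnS expn1 => /esym/eqP.
Qed.

End Morph.

Section BBsec.
Variables (F : finFieldType) (K : fieldExtType F) (e : 2.-tuple K).
Hypothesis he : basis_of fullv e.

Local Notation e0 := (tnth e ord0).
Local Notation e1 := (tnth e ord_max).
Local Notation c0 := (c0 e).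
Local Notation c1 := (c1 e).

Lemma embZ (a : F) (x : K) : emb a * x = a *: x.
Proof. by rewrite /emb mulr_algl. Qed.

Lemma coordE (x : K) : x = c0 x *: e0 + c1 x *: e1.
Proof.
rewrite {1}(coord_basis he (memvf x)) big_ord_recr big_ord_recr big_ord0 /=.
have -> : widen_ord (leqnSn 1) ord_max = ord0 :> 'I_2 by apply/val_inj.
by rewrite add0r !(tnth_nth 0).
Qed.

Lemma c0_comb (a b : F) : c0 (a *: e0 + b *: e1) = a.
Proof.
have fe := basis_free he.
rewrite /Defs.c0 linearD !linearZ /= !(tnth_nth 0).
by rewrite (coord_free ord0 ord0 fe) (coord_free ord_max ord0 fe) /= mulr1 mulr0 addr0.
Qed.

Lemma c1_comb (a b : F) : c1 (a *: e0 + b *: e1) = b.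
Proof.
have fe := basis_free he.
rewrite /Defs.c1 linearD !linearZ /= !(tnth_nth 0).
by rewrite (coord_free ord0 ord_max fe) (coord_free ord_max ord_max fe) /= mulr1 mulr0 add0r.
Qed.

Lemma e0_neq0 : e0 != 0.
Proof.
apply/eqP=> h; have := c0_comb 1 0; rewrite scale1r scale0r addr0 h.
by rewrite /Defs.c0 linear0 => /eqP; rewrite eq_sym oner_eq0.
Qed.

Definition delta := e0 * conjK e1 - e1 * conjK e0.

Lemma delta_neq0 : delta != 0.
Proof.
apply/eqP => /eqP; rewrite subr_eq0 => /eqP hd.
have ce0 : conjK e0 != 0 by rewrite fmorph_eq0 e0_neq0.
have : conjK (e1 / e0) = e1 / e0.
  rewrite fmorph_div; apply/eqP; rewrite eqr_div ?e0_neq0 //.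
  by rewrite mulrC hd mulrC.
case/conj_fixed => a ha.
have he1 : e1 = a *: e0 by rewrite -embZ -ha divfK ?e0_neq0.
have := c1_comb 0 1; rewrite scale0r add0r scale1r {1}he1.
have -> : a *: e0 = a *: e0 + 0 *: e1 by rewrite scale0r addr0.
by rewrite c1_comb => /eqP; rewrite eq_sym oner_eq0.
Qed.


Definition piE (j : 'I_5) (k : 'I_3) : K :=
  match val j, val k with
  | 0%N, 0%N => e0 | 1%N, 0%N => e1 | 2%N, 1%N => e0 | 3%N, 1%N => e1
  | 4%N, 2%N => 1 | _, _ => 0 end.
Definition Pi : 'M[K]_(5, 3) := \matrix_(j, k) piE j k.

Definition row3 (a b c : K) : 'rV[K]_3 :=
  \row_(k < 3) match val k with 0%N => a | 1%N => b | _ => c end.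

Lemma row3E (a b c : K) : (row3 a b c 0 0 = a) * (row3 a b c 0 1 = b) * (row3 a b c 0 2 = c).
Proof. by rewrite !mxE. Qed.

Lemma row3_eta (Z : 'rV[K]_3) : Z = row3 (Z 0 0) (Z 0 1) (Z 0 2).
Proof.
by apply/rowP => k; rewrite !mxE; case: k => [[|[|[|]]] hk] //=;
  congr (Z 0 _); apply/val_inj.
Qed.

Lemma mulPi (Z : 'rV[K]_5) :
  Z *m Pi = row3 (Z 0 0 * e0 + Z 0 1 * e1) (Z 0 2 * e0 + Z 0 3 * e1) (Z 0 4).
Proof.
apply/rowP => k; rewrite !mxE !big_ord_recr big_ord0 /= !mxE /piE /=.
case: k => [[|[|[|]]] hk] //=; rewrite ?mulr0 ?mulr1 ?add0r ?addr0 //;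
  first [congr (Z 0 _ * _ + Z 0 _ * _); apply/val_inj => //
        | congr (Z 0 _); apply/val_inj => //].
Qed.

Lemma mulPic (Z : 'rV[K]_5) :
  Z *m conjv Pi = row3 (Z 0 0 * conjK e0 + Z 0 1 * conjK e1)
                       (Z 0 2 * conjK e0 + Z 0 3 * conjK e1) (Z 0 4).
Proof.
apply/rowP => k; rewrite !mxE !big_ord_recr big_ord0 /= !mxE /piE /=.
case: k => [[|[|[|]]] hk] //=; rewrite ?rmorph0 ?rmorph1 ?mulr0 ?mulr1 ?add0r ?addr0 //;
  first [congr (Z 0 _ * _ + Z 0 _ * _); apply/val_inj => //
        | congr (Z 0 _); apply/val_inj => //].
Qed.

Lemma bbvE (x y : K) (t : F) :
  (bbv e x y t 0 0 = c0 x) * (bbv e x y t 0 1 = c1 x) * (bbv e x y t 0 2 = c0 y)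
  * (bbv e x y t 0 3 = c1 y) * (bbv e x y t 0 4 = t).
Proof. by rewrite !mxE. Qed.

Lemma embmE m n (v : 'M[F]_(m, n)) i j : (embm v : 'M[K]_(m, n)) i j = emb (v i j).
Proof. by rewrite mxE. Qed.

End BBsec.

Section BB3.
Variables (F : finFieldType) (K : fieldExtType F) (e : 2.-tuple K).
Hypothesis he : basis_of fullv e.
Local Notation e0 := (tnth e ord0).
Local Notation e1 := (tnth e ord_max).
Local Notation c0 := (c0 e).
Local Notation c1 := (c1 e).
Local Notation Pi := (Pi e).

Lemma conjv_embm m n (v : 'M[F]_(m, n)) : conjv (embm v : 'M[K]_(m, n)) = embm v.
Proof. by apply/matrixP => i j; rewrite !mxE conj_emb. Qed.

Lemma conjv_row3 (a b c : K) :
  conjv (row3 a b c) = row3 (conjK a) (conjK b) (conjK c).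
Proof. by apply/rowP => k; rewrite !mxE; case: k => [[|[|[|]]] hk]. Qed.

Lemma bbvPi (x y : K) (t : F) : embm (bbv e x y t) *m Pi = row3 x y (emb t).
Proof.
rewrite mulPi.
rewrite !embmE.
by rewrite !bbvE !embZ -(coordE he x) -(coordE he y).
Qed.

Lemma bbvPic (x y : K) (t : F) :
  embm (bbv e x y t) *m conjv Pi = row3 (conjK x) (conjK y) (emb t).
Proof.
rewrite -[embm _]conjv_embm /conjv -map_mxM -/(conjv _) bbvPi.
by rewrite conjv_row3 conj_emb.
Qed.


Lemma vbbv (v : 'rV[F]_5) :
  v = bbv e ((embm v *m Pi) 0 0) ((embm v *m Pi) 0 1) (v 0 4).
Proof.
rewrite mulPi !embmE !row3E !embZ.
apply/rowP => k; rewrite !mxE !(c0_comb he) !(c1_comb he).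
by case: k => [[|[|[|[|[|]]]]] hk] //=; congr (v 0 _); apply/val_inj.
Qed.

Lemma bbvZ (a : F) (x y : K) (t : F) :
  a *: bbv e x y t = bbv e (a *: x) (a *: y) (a * t).
Proof.
apply/rowP => k; rewrite !mxE /Defs.c0 /Defs.c1 !linearZ.
by case: k => [[|[|[|[|[|]]]]] hk].
Qed.

Lemma bbv_inj (x y x' y' : K) (t t' : F) :
  bbv e x y t = bbv e x' y' t' -> [/\ x = x', y = y' & t = t'].
Proof.
move=> h; have hk k : bbv e x y t 0 k = bbv e x' y' t' 0 k by rewrite h.
have := hk 0; have := hk 1; have := hk 2; have := hk 3; have := hk 4.
rewrite !bbvE => -> h3 h2 h1 h0.
by rewrite (coordE he x) (coordE he x') (coordE he y) (coordE he y') h0 h1 h2 h3.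
Qed.
End BB3.

Lemma o30 (p1 : (2 <= 3)%N) (p2 : (1 <= 2)%N) : widen_ord p1 (widen_ord p2 (@ord_max 0)) = (0 : 'I_3).
Proof. exact: val_inj. Qed.
Lemma o31 (p1 : (2 <= 3)%N) : widen_ord p1 (@ord_max 1) = (1 : 'I_3).
Proof. exact: val_inj. Qed.
Lemma o32 : (@ord_max 2) = (2 : 'I_3).
Proof. exact: val_inj. Qed.
Lemma o20 (p1 : (1 <= 2)%N) : widen_ord p1 (@ord_max 0) = (0 : 'I_2).
Proof. exact: val_inj. Qed.
Lemma o21 : (@ord_max 1) = (1 : 'I_2).
Proof. exact: val_inj. Qed.
Lemma o50 (p1 : (4 <= 5)%N) (p2 : (3 <= 4)%N) (p3 : (2 <= 3)%N) (p4 : (1 <= 2)%N) : widen_ord p1 (widen_ord p2 (widen_ord p3 (widen_ord p4 (@ord_max 0)))) = (0 : 'I_5).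
Proof. exact: val_inj. Qed.
Lemma o51 (p1 : (4 <= 5)%N) (p2 : (3 <= 4)%N) (p3 : (2 <= 3)%N) : widen_ord p1 (widen_ord p2 (widen_ord p3 (@ord_max 1))) = (1 : 'I_5).
Proof. exact: val_inj. Qed.
Lemma o52 (p1 : (4 <= 5)%N) (p2 : (3 <= 4)%N) : widen_ord p1 (widen_ord p2 (@ord_max 2)) = (2 : 'I_5).
Proof. exact: val_inj. Qed.
Lemma o53 (p1 : (4 <= 5)%N) : widen_ord p1 (@ord_max 3) = (3 : 'I_5).
Proof. exact: val_inj. Qed.
Lemma o54 : (@ord_max 4) = (4 : 'I_5).
Proof. exact: val_inj. Qed.
Lemma ord3_cases (i : 'I_3) : [\/ i = 0, i = 1 | i = 2].
Proof.
case: i => [[|[|[|]]] hi] //; [constructor 1|constructor 2|constructor 3]; exact: val_inj.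
Qed.
Definition ordE := (o30, o31, o32, o20, o21, o50, o51, o52, o53, o54).

Section QF.
Variable R : comNzRingType.

Definition qf9 (Q : 'M[R]_3) (x0 x1 x2 y0 y1 y2 : R) :=
  x0*Q 0 0*y0 + x0*Q 0 1*y1 + x0*Q 0 2*y2 + x1*Q 1 0*y0 + x1*Q 1 1*y1
  + x1*Q 1 2*y2 + x2*Q 2 0*y0 + x2*Q 2 1*y1 + x2*Q 2 2*y2.

Lemma qfE (Q : 'M[R]_3) (u : 'rV[R]_3) :
  qf Q u = qf9 Q (u 0 0) (u 0 1) (u 0 2) (u 0 0) (u 0 1) (u 0 2).
Proof.
rewrite /qf /qf9 !mxE !big_ord_recr !big_ord0 /= !mxE !big_ord_recr !big_ord0 /=.
rewrite !ordE. ring.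
Qed.

Definition Bq (Q : 'M[R]_3) (u v : 'rV[R]_3) := qf Q (u + v) - qf Q u - qf Q v.

Lemma qf_comb (Q : 'M[R]_3) (u v : 'rV[R]_3) a b :
  qf Q (a *: u + b *: v) = a ^+ 2 * qf Q u + b ^+ 2 * qf Q v + a * b * Bq Q u v.
Proof. rewrite /Bq !qfE !mxE /qf9; ring. Qed.

Lemma qfZ (Q : 'M[R]_3) (u : 'rV[R]_3) a : qf Q (a *: u) = a ^+ 2 * qf Q u.
Proof. rewrite !qfE !mxE /qf9; ring. Qed.

Definition disc (Q : 'M[R]_3) :=
  let a := Q 0 0 in let b := Q 1 1 in let c := Q 2 2 in
  let h := Q 0 1 + Q 1 0 in let g := Q 0 2 + Q 2 0 in
  let f := Q 1 2 + Q 2 1 in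
  4 * a * b * c + f * g * h - a * f ^+ 2 - b * g ^+ 2 - c * h ^+ 2.

Lemma discE (Q : 'M[R]_3) : conic_nondeg Q = (disc Q != 0).
Proof. by []. Qed.

Lemma iso_id (Q : 'M[R]_3) (u v : 'rV[R]_3) :
  qf Q u = 0 -> qf Q v = 0 -> Bq Q u v = 0 ->
  [/\ (u 0 1 * v 0 2 - u 0 2 * v 0 1) ^+ 2 * disc Q = 0,
      (u 0 2 * v 0 0 - u 0 0 * v 0 2) ^+ 2 * disc Q = 0 &
      (u 0 0 * v 0 1 - u 0 1 * v 0 0) ^+ 2 * disc Q = 0].
Proof.
move=> hu hv hB.
have E k : (if k == 0%N then (u 0 1 * v 0 2 - u 0 2 * v 0 1)
            else if k == 1%N then (u 0 2 * v 0 0 - u 0 0 * v 0 2)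
            else (u 0 0 * v 0 1 - u 0 1 * v 0 0)) ^+ 2 * disc Q =
   let G := if k == 0%N then qf9 Q (u 0 0) (u 0 1) (u 0 2) 1 0 0 + qf9 Q 1 0 0 (u 0 0) (u 0 1) (u 0 2)
            else if k == 1%N then qf9 Q (u 0 0) (u 0 1) (u 0 2) 0 1 0 + qf9 Q 0 1 0 (u 0 0) (u 0 1) (u 0 2)
            else qf9 Q (u 0 0) (u 0 1) (u 0 2) 0 0 1 + qf9 Q 0 0 1 (u 0 0) (u 0 1) (u 0 2) in
   let Fv := if k == 0%N then qf9 Q (v 0 0) (v 0 1) (v 0 2) 1 0 0 + qf9 Q 1 0 0 (v 0 0) (v 0 1) (v 0 2)
            else if k == 1%N then qf9 Q (v 0 0) (v 0 1) (v 0 2) 0 1 0 + qf9 Q 0 1 0 (v 0 0) (v 0 1) (v 0 2)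
            else qf9 Q (v 0 0) (v 0 1) (v 0 2) 0 0 1 + qf9 Q 0 0 1 (v 0 0) (v 0 1) (v 0 2) in
   let C := if k == 0%N then Q 0 0 else if k == 1%N then Q 1 1 else Q 2 2 in
   4 * qf Q u * qf Q v * C + Fv * G * Bq Q u v - qf Q u * Fv ^+ 2
     - qf Q v * G ^+ 2 - C * Bq Q u v ^+ 2.
  by case: k => [|[|k]] /=; rewrite /Bq /disc !qfE !mxE /qf9; ring.
have := E 0%N; have := E 1%N; have := E 2%N; rewrite /= hu hv hB.
by move=> -> -> ->; split; ring.
Qed.

Lemma row_neq0 n (u : 'rV[R]_n) : u != 0 -> exists i, u 0 i != 0.
Proof.
move=> hu; apply/existsP; apply: contraR hu => /existsPn h.
by apply/eqP/rowP => i; rewrite mxE; apply/eqP; move: (h i); rewrite negbK.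
Qed.
End QF.

Section QFF.
Variable R : fieldType.

Lemma iso_line (Q : 'M[R]_3) (u v : 'rV[R]_3) :
  conic_nondeg Q -> qf Q u = 0 -> qf Q v = 0 -> Bq Q u v = 0 -> u != 0 ->
  exists k, v = k *: u.
Proof.
rewrite discE => hd hu hv hB /row_neq0 [i hi].
case: (iso_id hu hv hB) => /eqP h0 /eqP h1 /eqP h2.
move: h0 h1 h2; rewrite !mulf_eq0 (negbTE hd) !orbF !orbb !subr_eq0.
move=> /eqP n0 /eqP n1 /eqP n2.
exists (v 0 i / u 0 i); apply/rowP => j; rewrite mxE.
apply: (mulIf hi); rewrite mulrAC divfK //.
case: (ord3_cases i) hi => -> hi; case: (ord3_cases j) => ->;
 first [by rewrite mulrC | by rewrite mulrC n0 mulrC | by rewrite mulrC -n0 mulrC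
       | by rewrite mulrC n1 mulrC | by rewrite mulrC -n1 mulrC
       | by rewrite mulrC n2 mulrC | by rewrite mulrC -n2 mulrC].
Qed.
End QFF.

Section BB5.
Variables (F : finFieldType) (K : fieldExtType F) (e : 2.-tuple K).
Hypothesis he : basis_of fullv e.
Local Notation e0 := (tnth e ord0).
Local Notation e1 := (tnth e ord_max).
Local Notation Pi := (Pi e).

Lemma sum5 (G : 'I_5 -> 'rV[K]_3) :
  \sum_i G i = G 0 + G 1 + G 2 + G 3 + G 4.
Proof. by rewrite !big_ord_recr big_ord0 /= add0r !ordE. Qed.

Lemma mul_Mx (Z : 'rV[K]_5) (x : K) :
  Z *m embm (mulmx5 e x) *m Pi =
  x *: row3 (Z 0 0 * e0 + Z 0 1 * e1) (Z 0 2 * e0 + Z 0 3 * e1) 0.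
Proof.
rewrite (mulmx_sum_row Z) mulmx_suml sum5.
rewrite -!scalemxAl -!map_row !rowK /mulrow /=.
rewrite !bbvPi // map_mx0 mul0mx.
apply/rowP => k; rewrite !mxE.
case: (ord3_cases k) => ->; rewrite ?mxE /= ?rmorph0; ring.
Qed.

Lemma mul_Mxc (Z : 'rV[K]_5) (x : K) :
  Z *m embm (mulmx5 e x) *m conjv Pi =
  conjK x *: row3 (Z 0 0 * conjK e0 + Z 0 1 * conjK e1)
                  (Z 0 2 * conjK e0 + Z 0 3 * conjK e1) 0.
Proof.
rewrite (mulmx_sum_row Z) mulmx_suml sum5.
rewrite -!scalemxAl -!map_row !rowK /mulrow /=.
rewrite !bbvPic // map_mx0 mul0mx.
apply/rowP => k; rewrite !mxE.
case: (ord3_cases k) => ->; rewrite ?mxE /= ?rmorph0 ?rmorphM; ring.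
Qed.


Lemma ord5_cases (i : 'I_5) : i = 0 \/ i = 1 \/ i = 2 \/ i = 3 \/ i = 4.
Proof.
case: i => [[|[|[|[|[|]]]]] hi] //;
  [left|right;left|right;right;left|right;right;right;left|right;right;right;right];
  exact: val_inj.
Qed.

Lemma row3_0 (Z : 'rV[K]_3) : [/\ Z 0 0 = 0, Z 0 1 = 0 & Z 0 2 = 0] -> Z = 0.
Proof.
case=> h0 h1 h2; apply/rowP => k; rewrite mxE.
by case: (ord3_cases k) => ->.
Qed.

Lemma row3_eq0 (a b c : K) : row3 a b c = 0 -> [/\ a = 0, b = 0 & c = 0].
Proof.
move=> h; have hk k : row3 a b c 0 k = 0 by rewrite h mxE.
by have := hk 0; have := hk 1; have := hk 2; rewrite !row3E.
Qed.

Lemma inj5 (Z : 'rV[K]_5) : Z *m Pi = 0 -> Z *m conjv Pi = 0 -> Z = 0.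
Proof.
rewrite mulPi mulPic => /row3_eq0 [a0 a1 a2] /row3_eq0 [b0 b1 _].
have dn := delta_neq0 he.
have z0 : Z 0 0 = 0.
  have : Z 0 0 * delta e = (Z 0 0 * e0 + Z 0 1 * e1) * conjK e1
                         - (Z 0 0 * conjK e0 + Z 0 1 * conjK e1) * e1.
    by rewrite /delta; ring.
  by rewrite a0 b0 !mul0r subrr => /eqP; rewrite mulf_eq0 (negbTE dn) orbF => /eqP.
have z1 : Z 0 1 = 0.
  have : Z 0 1 * delta e = (Z 0 0 * conjK e0 + Z 0 1 * conjK e1) * e0
                         - (Z 0 0 * e0 + Z 0 1 * e1) * conjK e0.
    by rewrite /delta; ring.
  by rewrite a0 b0 !mul0r subrr => /eqP; rewrite mulf_eq0 (negbTE dn) orbF => /eqP.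
have z2 : Z 0 2 = 0.
  have : Z 0 2 * delta e = (Z 0 2 * e0 + Z 0 3 * e1) * conjK e1
                         - (Z 0 2 * conjK e0 + Z 0 3 * conjK e1) * e1.
    by rewrite /delta; ring.
  by rewrite a1 b1 !mul0r subrr => /eqP; rewrite mulf_eq0 (negbTE dn) orbF => /eqP.
have z3 : Z 0 3 = 0.
  have : Z 0 3 * delta e = (Z 0 2 * conjK e0 + Z 0 3 * conjK e1) * e0
                         - (Z 0 2 * e0 + Z 0 3 * e1) * conjK e0.
    by rewrite /delta; ring.
  by rewrite a1 b1 !mul0r subrr => /eqP; rewrite mulf_eq0 (negbTE dn) orbF => /eqP.
apply/rowP => k; rewrite mxE; by case: (ord5_cases k) => [->|[->|[->|[->|->]]]].
Qed.

Lemma ex_nonfixed : exists x : K, conjK x != x.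
Proof.
case: (boolP (conjK e0 == e0)) => [/eqP h0|]; last by exists e0.
case: (boolP (conjK e1 == e1)) => [/eqP h1|]; last by exists e1.
have := delta_neq0 he; rewrite /delta h0 h1 mulrC subrr.
by rewrite eqxx.
Qed.

Lemma scale_conj_eq (x : K) m n (R : 'M[K]_(m, n)) :
  conjK x != x -> conjK x *: R = x *: R -> R = 0.
Proof.
move=> hx h; apply/eqP; have : (conjK x - x) *: R == 0.
  by rewrite scalerBl h subrr.
by rewrite scalemx_eq0 subr_eq0 (negbTE hx).
Qed.

Lemma g_cPi (P : 'rV[K]_5) : in_g e P -> P *m conjv Pi = 0.
Proof.
case=> hP4 hPx; have [x hx] := ex_nonfixed.
apply: (scale_conj_eq hx).
have := mul_Mxc P x; rewrite hPx -scalemxAl => ->.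
by rewrite mulPic hP4.
Qed.

Lemma g_conj_Pi (Q : 'rV[K]_5) : in_g e Q -> conjv Q *m Pi = 0.
Proof.
case=> hQ4 hQx; have [x hx] := ex_nonfixed.
apply: (scale_conj_eq hx).
have h : conjv Q *m embm (mulmx5 e x) = conjK x *: conjv Q.
  by rewrite -conjv_embm /conjv -map_mxM hQx map_mxZ.
have := mul_Mx (conjv Q) x; rewrite h -scalemxAl => ->.
by rewrite mulPi !mxE hQ4 rmorph0.
Qed.

End BB5.

Section BB6.
Variables (F : finFieldType) (K : fieldExtType F) (e : 2.-tuple K).
Hypothesis he : basis_of fullv e.
Local Notation e0 := (tnth e ord0).
Local Notation e1 := (tnth e ord_max).
Local Notation Pi := (Pi e).

Lemma o20z (p : (1 <= 2)%N) : widen_ord p (@ord_max 0) = ord0.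
Proof. exact: val_inj. Qed.

Lemma sum2 (G : 'I_2 -> 'rV[K]_5) : \sum_i G i = G ord0 + G ord_max.
Proof. by rewrite !big_ord_recr big_ord0 /= add0r o20z. Qed.
Lemma sum2' (G : 'I_2 -> 'rV[K]_3) : \sum_i G i = G ord0 + G ord_max.
Proof. by rewrite !big_ord_recr big_ord0 /= add0r o20z. Qed.

Lemma row3_scale (a : K) (X : 'rV[K]_3) :
  X 0 2 = 0 -> row3 (a * X 0 0) (a * X 0 1) (emb 0) = a *: X.
Proof.
move=> hX; apply/rowP => k; rewrite !mxE.
case: (ord3_cases k) => -> /=; rewrite ?hX ?rmorph0 ?mulr0 //.
Qed.

Lemma spl_Pi (r : 'rV[K]_2) (X : 'rV[K]_3) : X 0 2 = 0 ->
  r *m embm (spreadline e X) *m Pi = (r 0 ord0 * e0 + r 0 ord_max * e1) *: X.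
Proof.
move=> hX; rewrite (mulmx_sum_row r) mulmx_suml sum2'.
rewrite -!scalemxAl -!map_row !rowK !bbvPi // !row3_scale //.
by rewrite !scalerA scalerDl.
Qed.

Lemma spl_cPi (r : 'rV[K]_2) (X : 'rV[K]_3) : X 0 2 = 0 ->
  r *m embm (spreadline e X) *m conjv Pi =
  (r 0 ord0 * conjK e0 + r 0 ord_max * conjK e1) *: conjv X.
Proof.
move=> hX; rewrite (mulmx_sum_row r) mulmx_suml sum2'.
rewrite -!scalemxAl -!map_row !rowK !bbvPic //.
apply/rowP => k; rewrite !mxE; case: (ord3_cases k) => -> /=;
  rewrite ?mxE ?hX ?rmorph0 ?rmorphM; ring.
Qed.


Lemma lemG (Z : 'rV[K]_5) (X : 'rV[K]_3) (l : K) :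
  Z *m conjv Pi = 0 -> X 0 2 = 0 -> Z *m Pi = l *: X ->
  (Z <= embm (spreadline e X))%MS.
Proof.
move=> hZc hX hZ.
pose r : 'rV[K]_2 := \row_(i < 2) (if i == ord0 then conjK e1 else - conjK e0).
have r0 : r 0 ord0 = conjK e1 by rewrite mxE.
have r1 : r 0 ord_max = - conjK e0 by rewrite mxE.
set S := embm (spreadline e X).
have h1 : r *m S *m Pi = delta e *: X.
  by rewrite spl_Pi // r0 r1 /delta; congr (_ *: _); ring.
have h2 : r *m S *m conjv Pi = 0.
  rewrite spl_cPi // r0 r1.
  have -> : conjK e1 * conjK e0 + - conjK e0 * conjK e1 = 0 by ring.
  by rewrite scale0r.
have dn := delta_neq0 he.
have : Z - (l / delta e) *: (r *m S) = 0.
  apply: (inj5 he).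
    by rewrite mulmxBl -scalemxAl h1 hZ scalerA divfK // subrr.
  by rewrite mulmxBl -scalemxAl h2 hZc scaler0 subrr.
move/eqP; rewrite subr_eq0 => /eqP ->; by rewrite scalemxAl submxMl.
Qed.

End BB6.

Section Main.
Variables (F : finFieldType) (K : fieldExtType F) (e : 2.-tuple K).
Hypothesis he : basis_of fullv e.
Variable A : 'M[F]_(3, 5).
Hypothesis hA : \rank A = 3%N.
Hypothesis hAspread : forall X : 'rV[K]_3, X != 0 -> X 0 2 = 0 ->
              ~~ (spreadline e X <= A)%MS.
Local Notation e0 := (tnth e ord0).
Local Notation e1 := (tnth e ord_max).
Local Notation Pi := (Pi e).

Definition MM : 'M[K]_3 := embm A *m Pi.

Lemma embmM m n p (X : 'M[F]_(m, n)) (Y : 'M[F]_(n, p)) :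
  (embm (X *m Y) : 'M[K]_(m, p)) = embm X *m embm Y.
Proof. exact: map_mxM. Qed.

Lemma conjvM m n p (X : 'M[K]_(m, n)) (Y : 'M[K]_(n, p)) :
  conjv (X *m Y) = conjv X *m conjv Y.
Proof. exact: map_mxM. Qed.

Lemma conjvK m n (X : 'M[K]_(m, n)) : conjv (conjv X) = X.
Proof. by apply/matrixP => i j; rewrite !mxE (conj_invol he). Qed.

Lemma MM_w (w : 'rV[F]_3) : embm w *m MM = embm (w *m A) *m Pi.
Proof. by rewrite /MM mulmxA embmM. Qed.

Lemma Pi2 (Z : 'rV[K]_5) : (Z *m Pi) 0 2 = Z 0 4.
Proof. by rewrite mulPi row3E. Qed.

Lemma row3_scalec (a : K) (X : 'rV[K]_3) :
  X 0 2 = 0 -> row3 (conjK (a * X 0 0)) (conjK (a * X 0 1)) (emb 0) = conjK a *: conjv X.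
Proof.
move=> hX; apply/rowP => k; rewrite !mxE.
case: (ord3_cases k) => -> /=; rewrite ?mxE ?hX ?rmorph0 ?mulr0 ?rmorphM //.
Qed.

Lemma MM_unit : MM \in unitmx.
Proof.
rewrite unitmxE unitfE; apply/negP => /det0P [z nz hz].
set R := z *m embm A.
have hR : R *m Pi = 0 by rewrite /R -mulmxA.
set P := conjv R.
have hPA : P = conjv z *m embm A by rewrite /P /R conjvM conjv_embm.
have hPc : P *m conjv Pi = 0 by rewrite /P -conjvM hR /conjv map_mx0.
set X := P *m Pi.
have hX2 : X 0 2 = 0.
  by rewrite /X Pi2 /P mxE -Pi2 hR mxE rmorph0.
have hRc : R *m conjv Pi = conjv X by rewrite /X conjvM /P conjvK.
have rfA : row_free (embm A : 'M[K]_(3,5)) by rewrite /row_free mxrank_map hA.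
case: (eqVneq X 0) => [X0 | Xn0].
  have P0 : P = 0 by apply: (inj5 he).
  have R0 : R = 0 by rewrite -[R]conjvK -/P P0 /conjv map_mx0.
  by move: nz; rewrite -(mulmx_free_eq0 _ rfA) -/R R0 eqxx.
have := hAspread Xn0 hX2; rewrite -(map_submx (@emb F K)) -/(embm _).
apply/negP/negPn.
apply: (submx_trans (_ : _ <= P + R)%MS); last first.
  by rewrite addsmx_sub hPA !submxMl.
apply/row_subP => i.
have -> : row i (embm (spreadline e X)) = tnth e i *: P + conjK (tnth e i) *: R.
  apply/eqP; rewrite -subr_eq0; apply/eqP; apply: (inj5 he).
    rewrite mulmxBl mulmxDl -!scalemxAl -map_row rowK (bbvPi he) (row3_scale _ hX2).
    by rewrite hR scaler0 addr0 subrr.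
  rewrite mulmxBl mulmxDl -!scalemxAl -map_row rowK (bbvPic he) (row3_scalec _ hX2).
  by rewrite hPc hRc scaler0 add0r subrr.
by apply: addmx_sub_adds; apply: scalemx_sub; apply: submx_refl.
Qed.


Lemma embmE' m n (v : 'M[F]_(m, n)) i j : (embm v : 'M[K]_(m, n)) i j = emb (v i j).
Proof. by rewrite mxE. Qed.

Lemma MM2 (w : 'rV[F]_3) : (embm w *m MM) 0 2 = emb ((w *m A) 0 4).
Proof. by rewrite MM_w Pi2 embmE'. Qed.

Lemma bbA_w (w : 'rV[F]_3) : (w *m A) 0 4 != 0 ->
  bbA e (embm w *m MM) = ((w *m A) 0 4)^-1 *: (w *m A).
Proof.
move=> hs; rewrite /bbA MM2 MM_w.
set v := w *m A; set s := v 0 4.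
rewrite [in RHS](vbbv he v) bbvZ -/s.
by rewrite -!embZ -fmorphV mulVf // ![emb _ * (embm v *m Pi) _ _]mulrC.
Qed.

Lemma Aff (v : 'rV[F]_5) : v 0 4 = 1 ->
  ((v <= A)%MS <-> exists w : 'rV[F]_3, (embm w *m MM) 0 2 != 0 /\ v = bbA e (embm w *m MM)).
Proof.
move=> hv; split.
  case/submxP => w hw; subst v; exists w.
  have hs : (w *m A) 0 4 != 0 by rewrite hv oner_neq0.
  split; first by rewrite MM2 fmorph_eq0.
  by rewrite bbA_w // hv invr1 scale1r.
case=> w [h2 ->]; have hs : (w *m A) 0 4 != 0.
  by apply: contra_neq h2 => h0; rewrite MM2 h0 rmorph0.
by rewrite bbA_w // scalemxAl submxMl.
Qed.

Lemma Con (Q : 'M[F]_3) (v : 'rV[F]_5) : v 0 4 = 1 ->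
  ((exists u : 'rV[F]_3, [/\ u != 0, qf Q u = 0 & (v <= u *m A)%MS]) <->
   exists w : 'rV[F]_3, [/\ w != 0, qf Q w = 0,
                          (embm w *m MM) 0 2 != 0 &
                          v = bbA e (embm w *m MM)]).
Proof.
move=> hv; split.
  case=> u [nu qu /submxP [D hD]]; exists u; split => //.
    have hD' : v = D 0 0 *: (u *m A) by rewrite hD {1}(mx11_scalar D) mul_scalar_mx.
    have hs : (u *m A) 0 4 != 0.
      by apply/eqP => h0; move: hv; rewrite hD' mxE h0 mulr0 => /eqP; rewrite eq_sym oner_eq0.
    by rewrite MM2 fmorph_eq0.
  have hD' : v = D 0 0 *: (u *m A) by rewrite hD {1}(mx11_scalar D) mul_scalar_mx.
  have hs : (u *m A) 0 4 != 0.
    by apply/eqP => h0; move: hv; rewrite hD' mxE h0 mulr0 => /eqP; rewrite eq_sym oner_eq0.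
  rewrite bbA_w // hD'; congr (_ *: _).
  have : D 0 0 * (u *m A) 0 4 = 1 by move: hv; rewrite {1}hD' mxE.
  by move/(canRL (mulfK hs)); rewrite mul1r.
case=> w [nw qw h2 ->]; exists w; split => //.
have hs : (w *m A) 0 4 != 0.
  by apply: contra_neq h2 => h0; rewrite MM2 h0 rmorph0.
by rewrite bbA_w // scalemx_sub ?submx_refl.
Qed.

End Main.

Section Gen.
Variable R : fieldType.

Lemma decomp n (P Q Z : 'rV[R]_n) :
  (Z <= col_mx P Q)%MS -> exists a b : R, Z = a *: P + b *: Q.
Proof.
case/submxP => D ->; rewrite -[D]hsubmxK mul_row_col.
exists (lsubmx D 0 0), (rsubmx D 0 0).
by rewrite {1}(mx11_scalar (lsubmx D)) {1}(mx11_scalar (rsubmx D)) !mul_scalar_mx.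
Qed.

Lemma sub1 n (X Z : 'rV[R]_n) : (X <= Z)%MS -> exists k : R, X = k *: Z.
Proof.
case/submxP => D ->; exists (D 0 0).
by rewrite {1}(mx11_scalar D) mul_scalar_mx.
Qed.

Lemma rank2 n (w1 w2 : 'rV[R]_n) :
  (forall a b, a *: w1 + b *: w2 = 0 -> a = 0 /\ b = 0) ->
  \rank (col_mx w1 w2) = 2%N.
Proof.
move=> h; apply/eqP; rewrite -[2%N]/(1 + 1)%N -/(row_free _) -kermx_eq0.
apply/eqP/row_matrixP => i; rewrite row0.
set r := row i _.
have : r *m col_mx w1 w2 = 0 by rewrite /r -row_mul mulmx_ker row0.
rewrite -[r]hsubmxK mul_row_col.
rewrite {1}(mx11_scalar (lsubmx r)) {1}(mx11_scalar (rsubmx r)) !mul_scalar_mx.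
move/h => [ha hb].
rewrite -[r]hsubmxK (mx11_scalar (lsubmx r)) (mx11_scalar (rsubmx r)) ha hb.
have z : (0 : R)%:M = 0 :> 'M_1 by apply/matrixP => ? ?; rewrite !mxE mul0rn.
by rewrite z row_mxKl row_mxKr row_mx0.
Qed.

Lemma rank_le1 n (P Q : 'rV[R]_n) k : Q = k *: P -> (\rank (col_mx P Q) <= 1)%N.
Proof.
move=> ->; apply: leq_trans (rank_leq_row P).
by apply: mxrankS; rewrite col_mx_sub submx_refl scalemx_sub ?submx_refl.
Qed.

End Gen.

Section Main2.
Variables (F : finFieldType) (K : fieldExtType F) (e : 2.-tuple K).
Hypothesis he : basis_of fullv e.
Variable A : 'M[F]_(3, 5).
Hypothesis hA : \rank A = 3%N.
Hypothesis hAinf : exists u : 'rV[F]_3, (u *m A) 0 4 != 0.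
Hypothesis hAspread : forall X : 'rV[K]_3, X != 0 -> X 0 2 = 0 ->
              ~~ (spreadline e X <= A)%MS.
Local Notation e0 := (tnth e ord0).
Local Notation e1 := (tnth e ord_max).
Local Notation Pi := (Pi e).
Local Notation MM := (MM e A).

Lemma MMu : MM \in unitmx.
Proof. exact: MM_unit. Qed.

Lemma MM_nz (z : 'rV[K]_3) : z != 0 -> z *m MM != 0.
Proof.
by move=> nz; rewrite (mulmx_free_eq0 _ (_ : row_free MM)) // row_free_unit MMu.
Qed.

Lemma embm_nz (u : 'rV[F]_3) : u != 0 -> (embm u : 'rV[K]_3) != 0.
Proof. by move=> nu; rewrite map_mx_eq0. Qed.

Lemma Part2 (Q : 'M[F]_3) (X : 'rV[K]_3) : X != 0 -> X 0 2 = 0 ->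
  (exists u : 'rV[F]_3, [/\ u != 0, qf Q u = 0 & (u *m A <= spreadline e X)%MS]) ->
  exists w : 'rV[F]_3, [/\ w != 0, qf Q w = 0 & (X <= embm w *m MM)%MS].
Proof.
move=> nX hX [u [nu qu /submxP [r hr]]]; exists u; split => //.
have h : embm u *m MM = ((embm r : 'rV[K]_2) 0 ord0 * e0 + (embm r : 'rV[K]_2) 0 ord_max * e1) *: X.
  by rewrite MM_w hr embmM (spl_Pi he).
set c := (_ * e0 + _) in h.
have nz := MM_nz (embm_nz nu).
have nc : c != 0 by apply: contra nz; rewrite h => /eqP ->; rewrite scale0r.
by rewrite h -{1}(scale1r X) -(mulVf nc) -scalerA scalemx_sub ?submx_refl.
Qed.

Definition rowF (a b c : F) : 'rV[F]_3 :=
  \row_(k < 3) match val k with 0%N => a | 1%N => b | _ => c end.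

Lemma wA4 (w : 'rV[F]_3) :
  (w *m A) 0 4 = w 0 0 * A 0 4 + w 0 1 * A 1 4 + w 0 2 * A 2 4.
Proof. by rewrite mxE !big_ord_recr big_ord0 /= add0r !ordE. Qed.

Lemma rowFE (a b c : F) : (rowF a b c 0 0 = a) * (rowF a b c 0 1 = b) * (rowF a b c 0 2 = c).
Proof. by rewrite !mxE. Qed.

Lemma secant : exists w1 w2 : 'rV[F]_3, \rank (col_mx w1 w2) = 2%N /\
        (embm w1 *m MM) 0 2 = 0 /\ (embm w2 *m MM) 0 2 = 0.
Proof.
have [i hi] : exists i, A i 4 != 0.
  case: hAinf => u; rewrite wA4 => hu.
  case: (boolP (A 0 4 == 0)) => [/eqP h0|]; last by exists 0.
  case: (boolP (A 1 4 == 0)) => [/eqP h1|]; last by exists 1.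
  case: (boolP (A 2 4 == 0)) => [/eqP h2|]; last by exists 2.
  by move: hu; rewrite h0 h1 h2 !mulr0 !addr0 eqxx.
have ent (w : 'rV[F]_3) k : forall a b (w2 : 'rV[F]_3), a *: w + b *: w2 = 0 ->
    a * w 0 k + b * w2 0 k = 0.
  by move=> a b w2 h; have := congr1 (fun M : 'rV[F]_3 => M 0 k) h; rewrite !mxE.
case: (ord3_cases i) hi => -> hi.
- exists (rowF (A 1 4) (- A 0 4) 0), (rowF (A 2 4) 0 (- A 0 4)).
  split; last by rewrite !MM2 !wA4 !rowFE; split; apply/eqP; rewrite fmorph_eq0; apply/eqP; ring.
  apply: rank2 => a b h.
  have := ent _ 1 _ _ _ h; have := ent _ 2 _ _ _ h; rewrite !rowFE !mulr0 addr0 add0r.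
  move/eqP; rewrite mulrN oppr_eq0 mulf_eq0 (negbTE hi) orbF => /eqP ->.
  by move/eqP; rewrite mulrN oppr_eq0 mulf_eq0 (negbTE hi) orbF => /eqP ->.
- exists (rowF (- A 1 4) (A 0 4) 0), (rowF 0 (A 2 4) (- A 1 4)).
  split; last by rewrite !MM2 !wA4 !rowFE; split; apply/eqP; rewrite fmorph_eq0; apply/eqP; ring.
  apply: rank2 => a b h.
  have := ent _ 0 _ _ _ h; have := ent _ 2 _ _ _ h; rewrite !rowFE !mulr0 addr0 add0r.
  move/eqP; rewrite mulrN oppr_eq0 mulf_eq0 (negbTE hi) orbF => /eqP ->.
  by move/eqP; rewrite mulrN oppr_eq0 mulf_eq0 (negbTE hi) orbF => /eqP ->.
- exists (rowF (- A 2 4) 0 (A 0 4)), (rowF 0 (- A 2 4) (A 1 4)).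
  split; last by rewrite !MM2 !wA4 !rowFE; split; apply/eqP; rewrite fmorph_eq0; apply/eqP; ring.
  apply: rank2 => a b h.
  have := ent _ 0 _ _ _ h; have := ent _ 1 _ _ _ h; rewrite !rowFE !mulr0 addr0 add0r.
  move/eqP; rewrite mulrN oppr_eq0 mulf_eq0 (negbTE hi) orbF => /eqP ->.
  by move/eqP; rewrite mulrN oppr_eq0 mulf_eq0 (negbTE hi) orbF => /eqP ->.
Qed.

End Main2.

Section Gen2.
Variable R : fieldType.

Lemma solve2 n (x y : R) (U V : 'rV[R]_n) :
  x != 0 -> x *: U + y *: V = 0 -> U = (- y / x) *: V.
Proof.
move=> xn h; apply/rowP => j; move/rowP/(_ j): h; rewrite !mxE => h.
have -> : U 0 j = x^-1 * (x * U 0 j) by rewrite mulKf.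
have -> : x * U 0 j = - (y * V 0 j) by apply/eqP; rewrite -addr_eq0 h.
ring.
Qed.

Lemma solve3 n (x y0 y1 : R) (U0 U1 W : 'rV[R]_n) :
  x != 0 -> y0 *: U0 + y1 *: U1 + x *: W = 0 ->
  W = (- y0 / x) *: U0 + (- y1 / x) *: U1.
Proof.
move=> xn h; apply/rowP => j; move/rowP/(_ j): h; rewrite !mxE => h.
have -> : W 0 j = x^-1 * (x * W 0 j) by rewrite mulKf.
have -> : x * W 0 j = - (y0 * U0 0 j + y1 * U1 0 j) by apply/eqP; rewrite -addr_eq0 addrC h.
ring.
Qed.

End Gen2.

Section Main3.
Variables (F : finFieldType) (K : fieldExtType F) (e : 2.-tuple K).
Hypothesis he : basis_of fullv e.
Variable A : 'M[F]_(3, 5).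
Hypothesis hA : \rank A = 3%N.
Hypothesis hAinf : exists u : 'rV[F]_3, (u *m A) 0 4 != 0.
Hypothesis hAspread : forall X : 'rV[K]_3, X != 0 -> X 0 2 = 0 ->
              ~~ (spreadline e X <= A)%MS.
Local Notation e0 := (tnth e ord0).
Local Notation e1 := (tnth e ord_max).
Local Notation Pi := (Pi e).
Local Notation MM := (MM e A).

Lemma nondeg_emb (Qn : 'M[F]_3) : conic_nondeg Qn -> conic_nondeg (embm Qn : 'M[K]_3).
Proof.
rewrite !discE => h.
have -> : disc (embm Qn : 'M[K]_3) = emb (disc Qn).
  rewrite /disc !embmE' !rmorphB !rmorphD !rmorphM rmorph_nat; ring.
by rewrite fmorph_eq0.
Qed.

End Main3.

Section Main4.
Variables (F : finFieldType) (K : fieldExtType F) (e : 2.-tuple K).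
Hypothesis he : basis_of fullv e.
Variable A : 'M[F]_(3, 5).
Hypothesis hA : \rank A = 3%N.
Hypothesis hAinf : exists u : 'rV[F]_3, (u *m A) 0 4 != 0.
Hypothesis hAspread : forall X : 'rV[K]_3, X != 0 -> X 0 2 = 0 ->
              ~~ (spreadline e X <= A)%MS.
Local Notation e0 := (tnth e ord0).
Local Notation e1 := (tnth e ord_max).
Local Notation Pi := (Pi e).
Local Notation MM := (MM e A).

Lemma Part3 (Qn : 'M[F]_3) (hQn : conic_nondeg Qn) (P Q : 'rV[K]_5) :
  P != 0 -> Q != 0 -> in_g e P -> in_g e Q ->
  \rank (col_mx P Q) = 2%N ->
  (exists u : 'rV[K]_3, [/\ u != 0, qf (embm Qn) u = 0 &
       (u *m embm A <= col_mx P (conjv Q))%MS]) ->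
  (exists u : 'rV[K]_3, [/\ u != 0, qf (embm Qn) u = 0 &
       (u *m embm A <= col_mx (conjv P) Q)%MS]) ->
  forall X : 'rV[K]_3, X != 0 -> X 0 2 = 0 ->
    ((exists w : 'rV[K]_3, [/\ w != 0, qf (embm Qn) w = 0 &
                               (X <= w *m MM)%MS]) <->
     (bar_of e X P \/ bar_of e X Q)).
Proof.
move=> nP nQ gP gQ rPQ [u1 [nu1 qu1 h1]] [u2 [nu2 qu2 h2]] X nX hX.
set pP := P *m Pi; set pQ := Q *m Pi.
have gPc := g_cPi he gP; have gQc := g_cPi he gQ.
have [a [a' ha]] := decomp h1.
have hu1 : u1 *m MM = a *: pP.
  by rewrite /MM mulmxA ha mulmxDl -!scalemxAl (g_conj_Pi he gQ) scaler0 addr0.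
have [b' [b hb]] := decomp h2.
have hu2 : u2 *m MM = b *: pQ.
  by rewrite /MM mulmxA hb mulmxDl -!scalemxAl (g_conj_Pi he gP) scaler0 add0r.
have nz1 := MM_nz he hA hAspread nu1.
have nz2 := MM_nz he hA hAspread nu2.
have indep k : pQ != k *: pP.
  apply/eqP => hk.
  have : Q - k *: P = 0.
    apply: (inj5 he); rewrite mulmxBl -scalemxAl.
      by rewrite -/pP -/pQ hk subrr.
    by rewrite gPc gQc scaler0 subrr.
  move/eqP; rewrite subr_eq0 => /eqP /rank_le1; rewrite rPQ.
  by [].
have Pbar l : pP = l *: X -> bar_of e X P.
  by move=> hl; apply: (lemG he) gPc hX hl.
have Qbar l : pQ = l *: X -> bar_of e X Q.
  by move=> hl; apply: (lemG he) gQc hX hl.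
split; last first.
  have key (u : 'rV[K]_3) (R : 'rV[K]_5) c :
      u *m MM = c *: (R *m Pi) -> u *m MM != 0 -> bar_of e X R ->
      (X <= u *m MM)%MS.
    move=> hu nz /submxP [r hr].
    have hR : R *m Pi = (r 0 ord0 * e0 + r 0 ord_max * e1) *: X.
      by rewrite hr (spl_Pi he).
    rewrite hu hR scalerA in nz *; set d := (c * _) in nz *.
    have nd : d != 0 by apply: contra nz => /eqP ->; rewrite scale0r.
    by rewrite -{1}(scale1r X) -(mulVf nd) -scalerA scalemx_sub ?submx_refl.
  case=> hbar.
    by exists u1; split => //; apply: key hu1 nz1 hbar.
  by exists u2; split => //; apply: key hu2 nz2 hbar.
case=> w [nw qw /sub1 [k hk]].
have nk : k != 0 by apply: contra nX => /eqP k0; rewrite hk k0 scale0r.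
have w2 : (w *m MM) 0 2 = 0.
  by move: hX; rewrite hk mxE => /eqP; rewrite mulf_eq0 (negbTE nk) => /eqP.
have pP2 : pP 0 2 = 0 by rewrite /pP Pi2; case: gP.
have pQ2 : pQ 0 2 = 0 by rewrite /pQ Pi2; case: gQ.
have u12 : (u1 *m MM) 0 2 = 0 by rewrite hu1 mxE pP2 mulr0.
have u22 : (u2 *m MM) 0 2 = 0 by rewrite hu2 mxE pQ2 mulr0.
set c := col 2 MM.
have cE (z : 'rV[K]_3) : (z *m MM) 0 2 = (z *m c) 0 0.
  by rewrite !mxE; apply: eq_bigr => j _; rewrite /c [col _ _ _ _]mxE.
have cnz : c != 0.
  case: hAinf => u0 hu0; apply/eqP => c0.
  have : (embm u0 *m MM) 0 2 = 0 by rewrite cE c0 mulmx0 mxE.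
  by rewrite MM2 => /eqP; rewrite fmorph_eq0 (negbTE hu0).
pose Rm : 'M[K]_3 :=
  \matrix_(i, j) (if i == 0 then u1 0 j else if i == 1 then u2 0 j else w 0 j).
have r0 : row 0 Rm = u1 by apply/rowP => j; rewrite !mxE.
have r1 : row 1 Rm = u2 by apply/rowP => j; rewrite !mxE.
have r2 : row 2 Rm = w by apply/rowP => j; rewrite !mxE.
have z1 (z : 'rV[K]_3) : (z *m MM) 0 2 = 0 -> z *m c = 0.
  by move=> hz; apply/rowP => j; rewrite ord1 -cE hz mxE.
have hRc : Rm *m c = 0.
  apply/row_matrixP => i; rewrite row_mul row0.
  by case: (ord3_cases i) => ->; [rewrite r0 | rewrite r1 | rewrite r2]; exact: z1.
have : \det Rm == 0.
  rewrite -det_tr; apply/det0P; exists c^T; first by rewrite trmx_eq0.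
  by rewrite -trmx_mul hRc trmx0.
case/det0P => v nv hv.
have hv' : v 0 0 *: u1 + v 0 1 *: u2 + v 0 2 *: w = 0.
  by rewrite -hv (mulmx_sum_row v) !big_ord_recr big_ord0 /= add0r !ordE r0 r1 r2.
have nb : b != 0 by apply: contra nz2; rewrite hu2 => /eqP ->; rewrite scale0r.
have contra_dep (k' : K) : u2 = k' *: u1 -> False.
  move=> hk'; move: hu2; rewrite hk' -scalemxAl hu1 scalerA => /esym hpQ.
  have := indep (b^-1 * (k' * a)); rewrite -scalerA -hpQ scalerA mulVf //.
  by rewrite scale1r eqxx.
case: (eqVneq (v 0 2) 0) => [v20 | v2n].
  exfalso; move: hv'; rewrite v20 scale0r addr0 => hv'.
  case: (eqVneq (v 0 1) 0) => [v10 | v1n].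
    have v0n : v 0 0 != 0.
      apply: contra nv => /eqP v00; apply/eqP/rowP => j; rewrite mxE.
      by case: (ord3_cases j) => ->.
    move: hv'; rewrite v10 scale0r addr0 => /eqP; rewrite scalemx_eq0 (negbTE v0n) /=.
    by rewrite (negbTE nu1).
  have hu21 : u2 = (- v 0 0 / v 0 1) *: u1 by apply: solve2 v1n _; rewrite addrC.
  exact: (contra_dep _ hu21).
have hw := solve3 v2n hv'.
set al := - v 0 0 / v 0 2 in hw; set be := - v 0 1 / v 0 2 in hw.
clearbody al be.
move: qw; rewrite hw qf_comb qu1 qu2 !mulr0 !add0r => /eqP.
rewrite !mulf_eq0 => /orP [/orP [/eqP al0 | /eqP be0] | /eqP B0].
- right; have hX' : X = (k * be * b) *: pQ.
    by rewrite hk hw al0 scale0r add0r -scalemxAl hu2 !scalerA.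
  have nd : k * be * b != 0 by apply: contra nX; rewrite hX' => /eqP ->; rewrite scale0r.
  by apply: (Qbar (k * be * b)^-1); rewrite hX' scalerA mulVf // scale1r.
- left; have na : a != 0 by apply: contra nz1; rewrite hu1 => /eqP ->; rewrite scale0r.
  have hX' : X = (k * al * a) *: pP.
    by rewrite hk hw be0 scale0r addr0 -scalemxAl hu1 !scalerA.
  have nd : k * al * a != 0 by apply: contra nX; rewrite hX' => /eqP ->; rewrite scale0r.
  by apply: (Pbar (k * al * a)^-1); rewrite hX' scalerA mulVf // scale1r.
- have [k' hk'] := iso_line (@nondeg_emb F K Qn hQn) qu1 qu2 B0 nu1.
  by case: (contra_dep _ hk').
Qed.

End Main4.

Unset Implicit Arguments.

Theorem theorem5p4
  (F : finFieldType) (K : fieldExtType F) (e : 2.-tuple K)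
  (he : basis_of fullv e)
  (* the plane alpha of PG(4,q), spanned by the rows of A *)
  (A : 'M[F]_(3, 5)) (hA : \rank A = 3%N)
  (hAinf : exists u : 'rV[F]_3, (u *m A) 0 4 != 0)
  (hAspread : forall X : 'rV[K]_3, X != 0 -> X 0 2 = 0 ->
              ~~ (spreadline e X <= A)%MS)
  (* the non-degenerate conic N of alpha: points u *m A with qf Qn u = 0 *)
  (Qn : 'M[F]_3) (hQn : conic_nondeg Qn) :
  exists (M : 'M[K]_3) (Qc : 'M[F]_3),
    (* (1) B = {embm w *m M : w in PG(2,q)} is a Baer subplane ... *)
    M \in unitmx /\
    (* ... secant to l_infinity (it has two distinct points on l_infinity) *)
    (exists w1 w2 : 'rV[F]_3, \rank (col_mx w1 w2) = 2%N /\
        (embm w1 *m M) 0 2 = 0 /\ (embm w2 *m M) 0 2 = 0) /\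
    (* [B] = alpha *)
    (forall v : 'rV[F]_5, v 0 4 = 1 ->
       ((v <= A)%MS <->
        exists w : 'rV[F]_3, (embm w *m M) 0 2 != 0 /\
                             v = bbA e (embm w *m M))) /\
    (* C is an F_q-conic of B *)
    conic_nondeg Qc /\
    (* [C] = N *)
    (forall v : 'rV[F]_5, v 0 4 = 1 ->
       ((exists u : 'rV[F]_3, [/\ u != 0, qf Qn u = 0 & (v <= u *m A)%MS]) <->
        exists w : 'rV[F]_3, [/\ w != 0, qf Qc w = 0,
                               (embm w *m M) 0 2 != 0 &
                               v = bbA e (embm w *m M)])) /\
    (* (2) *)
    (forall X : 'rV[K]_3, X != 0 -> X 0 2 = 0 ->
       (exists u : 'rV[F]_3, [/\ u != 0, qf Qn u = 0 &
                                 (u *m A <= spreadline e X)%MS]) ->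
       exists w : 'rV[F]_3, [/\ w != 0, qf Qc w = 0 &
                                (X <= embm w *m M)%MS]) /\
    (* (3) *)
    (forall P Q : 'rV[K]_5,
       P != 0 -> Q != 0 -> in_g e P -> in_g e Q ->
       \rank (col_mx P Q) = 2%N ->
       (exists u : 'rV[K]_3, [/\ u != 0, qf (embm Qn) u = 0 &
            (u *m embm A <= col_mx P (conjv Q))%MS]) ->
       (exists u : 'rV[K]_3, [/\ u != 0, qf (embm Qn) u = 0 &
            (u *m embm A <= col_mx (conjv P) Q)%MS]) ->
       forall X : 'rV[K]_3, X != 0 -> X 0 2 = 0 ->
         ((exists w : 'rV[K]_3, [/\ w != 0, qf (embm Qc) w = 0 &
                                    (X <= w *m M)%MS]) <->
          (bar_of e X P \/ bar_of e X Q))).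
Proof.
Proof.
exists (MM e A), Qn.
split; first exact: (MM_unit he hA hAspread).
split; first by apply: secant.
split; first by move=> v hv; apply: Aff.
split; first exact: hQn.
split; first by move=> v hv; apply: Con.
split; first by move=> X nX hX; apply: Part2.
by move=> P Q nP nQ gP gQ rPQ h1 h2 X nX hX; apply: Part3.
Qed.
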